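(* Let $(A,\Delta)$ and $(B,\Delta)$ be regular multiplier Hopf algebras forming a non-degenerate dual pair, and let $A$ act on $B$ by $a\triangleright b=\sum\langle a,b_{(2)}\rangle b_{(1)}$, with this action extended to $M(B)$. If $m\in M(B)$ is a fixed point, i.e. $a\triangleright m=\varepsilon(a)m$ for all $a\in A$, then $m$ is a scalar multiple of the identity $1\in M(B)$.
   Context: Algebras are over $\mathbb C$, possibly without identity, with non-degenerate product; $M(\cdot)$ is the multiplier algebra. A regular multiplier Hopf algebra is a pair $(A,\Delta)$ with $\Delta:A\to M(A\otimes A)$ a coassociative homomorphism such that $\Delta(a)(1\otimes b),(a\otimes 1)\Delta(b),\Delta(a)(b\otimes 1),(1\otimes a)\Delta(b)\in A\otimes A$, the maps $a\otimes b\mapsto\Delta(a)(1\otimes b)$, $a\otimes b\mapsto(a\otimes 1)\Delta(b)$ are bijective, and likewise for the flipped comultiplication; it has counit $\varepsilon$ and bijective antipode $S$; Sweedler notation is used with legs covered. A non-degenerate dual pair: a non-degenerate bilinear form $\langle\cdot,\cdot\rangle:A\times B\to\mathbb C$ such that for all $a\in A,b\in B$ the multipliers $b\triangleright a=\sum\langle a_{(2)},b\rangle a_{(1)}$ and $a\triangleleft b=\sum\langle a_{(1)},b\rangle a_{(2)}$ lie in $A$, $a\triangleright b=\sum\langle a,b_{(2)}\rangle b_{(1)}$ and $b\triangleleft a=\sum\langle a,b_{(1)}\rangle b_{(2)}$ lie in $B$, with $\langle b\triangleright a,b'\rangle=\langle a,b'b\rangle$, $\langle a\triangleleft b,b'\rangle=\langle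 a,bb'\rangle$, $\langle a',a\triangleright b\rangle=\langle a'a,b\rangle$, $\langle a',b\triangleleft a\rangle=\langle aa',b\rangle$, and these four actions are unital. With $a\triangleright b$, $B$ is a left $A$-module algebra, and the action is extended to $M(B)$ by letting $a\triangleright m\in M(B)$ be the multiplier with $(a\triangleright m)b=\sum a_{(1)}\triangleright(m(S(a_{(2)})\triangleright b))$ and $b(a\triangleright m)=\sum a_{(2)}\triangleright((S^{-1}(a_{(1)})\triangleright b)m)$ for $b\in B$. *)

(* Defs.v *)
(* Regular multiplier Hopf algebras (van Daele) over a field,
   with the algebraic tensor product A (x) A modelled as finite formal sums
   (seq of pairs) modulo the standard tensor-product equivalence (equal
   evaluation on every bilinear form), and multipliers modelled as pairs of
   left/right actions. *)
From HB Require Import structures.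
From mathcomp Require Import all_boot all_order all_algebra.
From mathcomp Require Import reals complex.

Set Implicit Arguments.
Unset Strict Implicit.
Unset Printing Implicit Defensive.

Import GRing.Theory.
Local Open Scope ring_scope.

Section MHA.
Variable F : fieldType.

Record nualg := NUAlg {
  nua_car :> lmodType F;
  nua_mul : nua_car -> nua_car -> nua_car;
  nua_mulDl : forall (k : F) x y z,
     nua_mul (k *: x + y) z = k *: nua_mul x z + nua_mul y z;
  nua_mulDr : forall (k : F) x y z,
     nua_mul z (k *: x + y) = k *: nua_mul z x + nua_mul z y;
  nua_mulA : forall x y z, nua_mul x (nua_mul y z) = nua_mul (nua_mul x y) z;
  nua_ndl : forall a, (forall x, nua_mul x a = 0) -> a = 0;
  nua_ndr : forall a, (forall x, nua_mul a x = 0) -> a = 0 }.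
Arguments nua_mul : clear implicits.

(* the multiplier algebra M(A): pairs (left action m b, right action b m)
   with  x (m y) = (x m) y *)
Record mult (A : nualg) := Mult {
  mL : A -> A;
  mR : A -> A;
  mLR : forall x y, nua_mul A x (mL y) = nua_mul A (mR x) y }.

Section Tensor.
Variable A : nualg.
Local Notation mul := (nua_mul A).

Definition tens := seq (A * A)%type.
Definition tens3 := seq (A * A * A)%type.

Definition bilin_form (f : A -> A -> F) := forall (k : F) x y z,
  f (k *: x + y) z = k * f x z + f y z /\ f z (k *: x + y) = k * f z x + f z y.
Definition trilin_form (f : A -> A -> A -> F) := forall (k : F) x y z w,
  [/\ f (k *: x + y) z w = k * f x z w + f y z w,
      f z (k *: x + y) w = k * f z x w + f z y w &
      f z w (k *: x + y) = k * f z w x + f z w y].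

Definition teq (s t : tens) := forall f, bilin_form f ->
  \sum_(p <- s) f p.1 p.2 = \sum_(p <- t) f p.1 p.2.
Definition teq3 (s t : tens3) := forall f, trilin_form f ->
  \sum_(p <- s) f p.1.1 p.1.2 p.2 = \sum_(p <- t) f p.1.1 p.1.2 p.2.

Definition tmul (s t : tens) : tens :=
  [seq (mul p.1 q.1, mul p.2 q.2) | p <- s, q <- t].
Definition tscale (k : F) (s : tens) : tens := [seq (k *: p.1, p.2) | p <- s].
Definition tflip (s : tens) : tens := [seq (p.2, p.1) | p <- s].

Record mult2 := Mult2 { ml2 : tens -> tens; mr2 : tens -> tens }.
Definition is_mult2 (m : mult2) :=
  forall x y, teq (tmul x (ml2 m y)) (tmul (mr2 m x) y).
Definition meq2 (m n : mult2) :=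
  forall x, teq (ml2 m x) (ml2 n x) /\ teq (mr2 m x) (mr2 n x).
Definition mcomp (m n : mult2) := Mult2 (ml2 m \o ml2 n) (mr2 n \o mr2 m).
Definition melt (t : tens) := Mult2 (tmul t) (tmul^~ t).
Definition m1x (b : A) := Mult2 (map (fun p => (p.1, mul b p.2)))
                                (map (fun p => (p.1, mul p.2 b))).
Definition mx1 (b : A) := Mult2 (map (fun p => (mul b p.1, p.2)))
                                (map (fun p => (mul p.1 b, p.2))).
Definition msum (ms : seq mult2) :=
  Mult2 (fun x => flatten [seq ml2 m x | m <- ms])
        (fun x => flatten [seq mr2 m x | m <- ms]).
Definition in_tens (m : mult2) := exists t, meq2 m (melt t).
Definition mflip (m : mult2) :=
  Mult2 (tflip \o ml2 m \o tflip) (tflip \o mr2 m \o tflip).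

Definition comult_hom (D : A -> mult2) :=
  [/\ forall a, is_mult2 (D a),
      forall (k : F) a b x,
        teq (ml2 (D (k *: a + b)) x) (tscale k (ml2 (D a) x) ++ ml2 (D b) x) /\
        teq (mr2 (D (k *: a + b)) x) (tscale k (mr2 (D a) x) ++ mr2 (D b) x) &
      forall a b, meq2 (D (mul a b)) (mcomp (D a) (D b))].

Definition T1 (D : A -> mult2) (s : tens) :=
  msum [seq mcomp (D p.1) (m1x p.2) | p <- s].
Definition T2 (D : A -> mult2) (s : tens) :=
  msum [seq mcomp (mx1 p.1) (D p.2) | p <- s].

(* T : A (x) A -> A (x) A is bijective (T already known to land in A (x) A) *)
Definition tens_bij (T : tens -> mult2) :=
  (forall s s', meq2 (T s) (T s') -> teq s s') /\
  (forall t, exists s, meq2 (T s) (melt t)).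

Definition mha_cond (D : A -> mult2) :=
  [/\ forall a b, in_tens (mcomp (D a) (m1x b)),
      forall a b, in_tens (mcomp (mx1 a) (D b)),
      tens_bij (T1 D) & tens_bij (T2 D)].

(* coassociativity, legs covered:
   (a (x) 1 (x) 1)(D (x) i)(D(b)(1 (x) c)) = (i (x) D)((a (x) 1)D(b))(1 (x) 1 (x) c) *)
Definition coassoc (D : A -> mult2) :=
  forall a b c (t t' : tens) (f g : A -> tens),
    meq2 (mcomp (D b) (m1x c)) (melt t) ->
    (forall x, meq2 (mcomp (mx1 a) (D x)) (melt (f x))) ->
    meq2 (mcomp (mx1 a) (D b)) (melt t') ->
    (forall x, meq2 (mcomp (D x) (m1x c)) (melt (g x))) ->
    teq3 (flatten [seq [seq (u.1, u.2, p.2) | u <- f p.1] | p <- t])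
         (flatten [seq [seq (p.1, u.1, u.2) | u <- g p.2] | p <- t']).

Definition is_counit (D : A -> mult2) (eps : A -> F) :=
  [/\ forall (k : F) a b, eps (k *: a + b) = k * eps a + eps b,
      forall a b, eps (mul a b) = eps a * eps b,
      forall a b t, meq2 (mcomp (D a) (m1x b)) (melt t) ->
        \sum_(p <- t) eps p.1 *: p.2 = mul a b &
      forall a b t, meq2 (mcomp (mx1 a) (D b)) (melt t) ->
        \sum_(p <- t) eps p.2 *: p.1 = mul a b].

Definition is_antipode (D : A -> mult2) (eps : A -> F) (S : A -> A) :=
  [/\ forall (k : F) a b, S (k *: a + b) = k *: S a + S b,
      forall a b t, meq2 (mcomp (D a) (m1x b)) (melt t) ->
        \sum_(p <- t) mul (S p.1) p.2 = eps a *: b &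
      forall a b t, meq2 (mcomp (mx1 b) (D a)) (melt t) ->
        \sum_(p <- t) mul p.1 (S p.2) = eps a *: b].

End Tensor.

Record rmha := RMHA {
  rmha_alg :> nualg;
  Delta : rmha_alg -> mult2 rmha_alg;
  counit : rmha_alg -> F;
  antipode : rmha_alg -> rmha_alg;
  antipode_inv : rmha_alg -> rmha_alg;
  rmha_hom : comult_hom Delta;
  rmha_coassoc : coassoc Delta;
  rmha_cond : mha_cond Delta;
  rmha_cond_op : mha_cond (fun a => mflip (Delta a));
  rmha_counit : is_counit Delta counit;
  rmha_antipode : is_antipode Delta counit antipode;
  rmha_SK : cancel antipode antipode_inv;
  rmha_KS : cancel antipode_inv antipode }.
Arguments counit : clear implicits.
Arguments antipode : clear implicits.
Arguments antipode_inv : clear implicits.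

(* non-degenerate dual pair, with the four actions
     actBA b a = b |> a = sum <a(2),b> a(1)      (in A)
     actAB' a b = a <| b = sum <a(1),b> a(2)     (in A)
     actAB a b = a |> b = sum <a,b(2)> b(1)      (in B)
     actBA' b a = b <| a = sum <a,b(1)> b(2)     (in B)
   each characterised as the corresponding multiplier (legs covered). *)
Record dual_pair (A B : rmha) := DualPair {
  pairing : A -> B -> F;
  actBA : B -> A -> A;
  actAB' : A -> B -> A;
  actAB : A -> B -> B;
  actBA' : B -> A -> B;
  dp_bilin : forall (k : F) a a' b b',
     pairing (k *: a + a') b = k * pairing a b + pairing a' b /\
     pairing a (k *: b + b') = k * pairing a b + pairing a b';
  dp_nondeg_l : forall a, (forall b, pairing a b = 0) -> a = 0;
  dp_nondeg_r : forall b, (forall a, pairing a b = 0) -> b = 0;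
  dp_actBA : forall b a c t,
     (meq2 (mcomp (Delta a) (mx1 c)) (melt t) ->
       nua_mul A (actBA b a) c = \sum_(p <- t) pairing p.2 b *: p.1) /\
     (meq2 (mcomp (mx1 c) (Delta a)) (melt t) ->
       nua_mul A c (actBA b a) = \sum_(p <- t) pairing p.2 b *: p.1);
  dp_actAB' : forall a b c t,
     (meq2 (mcomp (Delta a) (m1x c)) (melt t) ->
       nua_mul A (actAB' a b) c = \sum_(p <- t) pairing p.1 b *: p.2) /\
     (meq2 (mcomp (m1x c) (Delta a)) (melt t) ->
       nua_mul A c (actAB' a b) = \sum_(p <- t) pairing p.1 b *: p.2);
  dp_actAB : forall a b c t,
     (meq2 (mcomp (Delta b) (mx1 c)) (melt t) ->
       nua_mul B (actAB a b) c = \sum_(p <- t) pairing a p.2 *: p.1) /\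
     (meq2 (mcomp (mx1 c) (Delta b)) (melt t) ->
       nua_mul B c (actAB a b) = \sum_(p <- t) pairing a p.2 *: p.1);
  dp_actBA' : forall a b c t,
     (meq2 (mcomp (Delta b) (m1x c)) (melt t) ->
       nua_mul B (actBA' b a) c = \sum_(p <- t) pairing a p.1 *: p.2) /\
     (meq2 (mcomp (m1x c) (Delta b)) (melt t) ->
       nua_mul B c (actBA' b a) = \sum_(p <- t) pairing a p.1 *: p.2);
  dp_adj : forall a a' b b',
     [/\ pairing (actBA b a) b' = pairing a (nua_mul B b' b),
         pairing (actAB' a b) b' = pairing a (nua_mul B b b'),
         pairing a' (actAB a b) = pairing (nua_mul A a' a) b &
         pairing a' (actBA' b a) = pairing (nua_mul A a a') b];
  dp_unital :
     [/\ forall a, exists s : seq (B * A), a = \sum_(p <- s) actBA p.1 p.2,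
         forall a, exists s : seq (A * B), a = \sum_(p <- s) actAB' p.1 p.2,
         forall b, exists s : seq (A * B), b = \sum_(p <- s) actAB p.1 p.2 &
         forall b, exists s : seq (B * A), b = \sum_(p <- s) actBA' p.1 p.2] }.

(* The extension of the action  a |> b  to M(B):  (nL, nR) are the left and
   right actions of the multiplier  a |> m, i.e. for every b in B
     (a |> m) b = sum a(1) |> (m (S(a(2)) |> b)),
     b (a |> m) = sum a(2) |> ((S^-1(a(1)) |> b) m),
   with the legs covered by writing b = sum_k c_k |> b_k (unitality) and using
     sum a(1) (x) S^-1(c) a(2)  = (1 (x) S^-1(c)) D(a),
     sum S(c) a(1) (x) a(2)     = (S(c) (x) 1) D(a). *)
Definition is_act_mult (A B : rmha) (P : dual_pair A B) (a : A) (m : mult B)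
    (nL nR : B -> B) :=
  (forall (s : seq (A * B)) (g : A -> tens A) (b : B),
     b = \sum_(p <- s) actAB P p.1 p.2 ->
     (forall c, meq2 (mcomp (m1x (antipode_inv A c)) (Delta a)) (melt (g c))) ->
     nL b = \sum_(p <- s) \sum_(q <- g p.1)
              actAB P q.1 (mL m (actAB P (antipode A q.2) p.2))) /\
  (forall (s : seq (A * B)) (g : A -> tens A) (b : B),
     b = \sum_(p <- s) actAB P p.1 p.2 ->
     (forall c, meq2 (mcomp (mx1 (antipode A c)) (Delta a)) (melt (g c))) ->
     nR b = \sum_(p <- s) \sum_(q <- g p.1)
              actAB P q.2 (mR m (actAB P (antipode_inv A q.1) p.2))).

Definition fixed_point (A B : rmha) (P : dual_pair A B) (m : mult B) :=
  forall a : A, is_act_mult P a m (fun b => counit A a *: mL m b)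
                                  (fun b => counit A a *: mR m b).

End MHA.

(* Main.v *)
Require Import Defs.
From mathcomp Require Import all_boot all_order all_algebra.
From mathcomp Require Import reals complex.
From HB Require Import structures.
From Stdlib Require Import Classical.
Set Implicit Arguments.
Unset Strict Implicit.
Unset Printing Implicit Defensive.
Import GRing.Theory.
Local Open Scope ring_scope.

Section Lin.
Variable F : fieldType.

Definition flin (U : lmodType F) (g : U -> F) :=
  forall (k : F) x y, g (k *: x + y) = k * g x + g y.
Definition vlin (U V : lmodType F) (g : U -> V) :=
  forall (k : F) x y, g (k *: x + y) = k *: g x + g y.
Definition bil (U V : lmodType F) (f : U -> V -> F) :=
  (forall z, flin (f ^~ z)) /\ (forall z, flin (f z)).

Section FL.
Variables (U : lmodType F) (g : U -> F) (hg : flin g).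
Lemma flin0 : g 0 = 0.
Proof. have h := hg 1 0 0; rewrite scale1r addr0 mul1r in h; by apply: (addrI (g 0)); rewrite addr0 -h. Qed.
Lemma flinD x y : g (x + y) = g x + g y.
Proof. by rewrite -{1}(scale1r x) hg mul1r. Qed.
Lemma flinZ k x : g (k *: x) = k * g x.
Proof. by rewrite -(addr0 (k *: x)) hg flin0 addr0. Qed.
Lemma flinN x : g (- x) = - g x.
Proof. by rewrite -scaleN1r flinZ mulN1r. Qed.
Lemma flinB x y : g (x - y) = g x - g y.
Proof. by rewrite flinD flinN. Qed.
Lemma flin_sum I (r : seq I) (P : pred I) (h : I -> U) :
  g (\sum_(i <- r | P i) h i) = \sum_(i <- r | P i) g (h i).
Proof.
elim: r => [|i r IH]; first by rewrite !big_nil flin0.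
by rewrite !big_cons; case: (P i); rewrite ?flinD IH.
Qed.
End FL.

Section VL.
Variables (U V : lmodType F) (g : U -> V) (hg : vlin g).
Lemma vlin0 : g 0 = 0.
Proof. have h := hg 1 0 0; rewrite scale1r addr0 scale1r in h; by apply: (addrI (g 0)); rewrite addr0 -h. Qed.
Lemma vlinD x y : g (x + y) = g x + g y.
Proof. by rewrite -{1}(scale1r x) hg scale1r. Qed.
Lemma vlinZ k x : g (k *: x) = k *: g x.
Proof. by rewrite -(addr0 (k *: x)) hg vlin0 addr0. Qed.
Lemma vlinN x : g (- x) = - g x.
Proof. by rewrite -scaleN1r vlinZ scaleN1r. Qed.
Lemma vlinB x y : g (x - y) = g x - g y.
Proof. by rewrite vlinD vlinN. Qed.
Lemma vlin_sum I (r : seq I) (P : pred I) (h : I -> U) :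
  g (\sum_(i <- r | P i) h i) = \sum_(i <- r | P i) g (h i).
Proof.
elim: r => [|i r IH]; first by rewrite !big_nil vlin0.
by rewrite !big_cons; case: (P i); rewrite ?vlinD IH.
Qed.
End VL.

Section TN.
Variables (U V W : lmodType F) (pr : U -> W -> F).
Hypothesis pr_lin : forall w, flin (pr ^~ w).
Hypothesis pr_nd : forall u, (forall w, pr u w = 0) -> u = 0.

Lemma TN_n n (t : seq (U * V)) : (size t <= n)%N ->
  (forall w, \sum_(p <- t) pr p.1 w *: p.2 = 0) ->
  forall f, bil f -> \sum_(p <- t) f p.1 p.2 = 0.
Proof.
elim: n t => [|n IH] [|[x y] t] //=; try by move=> *; rewrite big_nil.
move=> st H f [f1 f2]; rewrite big_cons /=.
case: (classic (exists w, pr x w <> 0)) => [[w0 hw0]|hno]; last first.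
  have x0 : x = 0.
    apply: pr_nd => w; case: (classic (pr x w = 0)) => // ne.
    by exfalso; apply: hno; exists w.
  subst x; rewrite (flin0 (f1 y)) add0r.
  have Ht : forall w, \sum_(p <- t) pr p.1 w *: p.2 = 0.
    by move=> w; have := H w; rewrite big_cons /= (flin0 (pr_lin w)) scale0r add0r.
  exact: (IH t st Ht f (conj f1 f2)).
set d := pr x w0.
pose lam u := pr u w0 / d.
pose t2 := [seq (p.1 - lam p.1 *: x, p.2) | p <- t].
have ey : y = - \sum_(p <- t) lam p.1 *: p.2.
  have := H w0; rewrite big_cons /= -/d => /eqP; rewrite addr_eq0 => /eqP e.
  apply: (@scalerI _ _ d); first by apply/eqP.
  rewrite e scalerN scaler_sumr; congr (- _); apply: eq_bigr => p _.
  by rewrite scalerA /lam mulrCA divff ?mulr1 //; apply/eqP.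
have -> : f x y + \sum_(p <- t) f p.1 p.2 = \sum_(p <- t2) f p.1 p.2.
  rewrite big_map /= ey (flinN (f2 x)) (flin_sum (f2 x)).
  rewrite -sumrN -big_split /=; apply: eq_bigr => p _.
  by rewrite (flinZ (f2 x)) (flinB (f1 p.2)) (flinZ (f1 p.2)) addrC.
apply: IH; [by rewrite size_map | | by split].
move=> w; rewrite big_map /=.
have -> : \sum_(p <- t) pr (p.1 - lam p.1 *: x) w *: p.2 =
   \sum_(p <- t) pr p.1 w *: p.2 - pr x w *: \sum_(p <- t) lam p.1 *: p.2.
  rewrite scaler_sumr -sumrB; apply: eq_bigr => p _.
  by rewrite (flinB (pr_lin w)) (flinZ (pr_lin w)) scalerBl scalerA mulrC.
by rewrite -scalerN -ey addrC; have := H w; rewrite big_cons.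
Qed.

Lemma TN (t : seq (U * V)) :
  (forall w, \sum_(p <- t) pr p.1 w *: p.2 = 0) ->
  forall f, bil f -> \sum_(p <- t) f p.1 p.2 = 0.
Proof. exact: (@TN_n (size t)). Qed.
End TN.
End Lin.
Section Tens.
Variables (F : fieldType) (X : nualg F).
Local Notation "x ** y" := (@nua_mul F X x y) (at level 40, left associativity).
Implicit Types s t u : tens X.

Definition tsum (f : X -> X -> F) (t : tens X) := \sum_(p <- t) f p.1 p.2.

Lemma bilinE (f : X -> X -> F) : bilin_form f <-> bil f.
Proof.
split=> [h|[h1 h2]]; first by split=> z k x y; have [] := h k x y z.
by move=> k x y z; rewrite h1 h2.
Qed.

Lemma teq_refl s : teq s s. Proof. by []. Qed.
Lemma teq_sym s t : teq s t -> teq t s. Proof. by move=> h f hf; rewrite h. Qed.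
Lemma teq_trans s t u : teq s t -> teq t u -> teq s u.
Proof. by move=> h1 h2 f hf; rewrite h1 // h2. Qed.
Lemma teq_cat s s' t t' : teq s s' -> teq t t' -> teq (s ++ t) (s' ++ t').
Proof. by move=> h1 h2 f hf; rewrite !big_cat h1 // h2. Qed.

Lemma sum_flatten (V : nmodType) I (r : seq I) (G : I -> tens X) (phi : X * X -> V) :
  \sum_(p <- flatten [seq G i | i <- r]) phi p = \sum_(i <- r) \sum_(p <- G i) phi p.
Proof. by rewrite big_flatten big_map. Qed.

Lemma teq_flatten I (r : seq I) (G H : I -> tens X) :
  (forall i, teq (G i) (H i)) ->
  teq (flatten [seq G i | i <- r]) (flatten [seq H i | i <- r]).
Proof.
move=> h f hf; rewrite !sum_flatten.
by apply: eq_bigr => i _; apply: h.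
Qed.

Lemma sum_tmul (V : nmodType) s t (phi : X * X -> V) :
  \sum_(p <- tmul s t) phi p =
  \sum_(p <- s) \sum_(q <- t) phi (p.1 ** q.1, p.2 ** q.2).
Proof. by rewrite /tmul big_allpairs_dep. Qed.

Lemma mulvl z : vlin (fun x : X => x ** z).
Proof. by move=> k x y; rewrite nua_mulDl. Qed.
Lemma mulvr z : vlin (fun x : X => z ** x).
Proof. by move=> k x y; rewrite nua_mulDr. Qed.

Lemma bil_sum I (r : seq I) (G : I -> X -> X -> F) :
  (forall i, bil (G i)) -> bil (fun a b => \sum_(i <- r) G i a b).
Proof.
move=> h; split=> z k x y.
  rewrite mulr_sumr -big_split; apply: eq_bigr => i _; by have [h1 _] := h i; rewrite h1.
rewrite mulr_sumr -big_split; apply: eq_bigr => i _; by have [_ h2] := h i; rewrite h2.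
Qed.

Lemma bil_comp (f : X -> X -> F) (g1 g2 : X -> X) :
  bil f -> vlin g1 -> vlin g2 -> bil (fun a b => f (g1 a) (g2 b)).
Proof.
move=> [h1 h2] l1 l2; split=> z k x y /=; first by rewrite l1 h1.
by rewrite l2 h2.
Qed.

Lemma bil_prod (g1 g2 : X -> F) : flin g1 -> flin g2 -> bil (fun a b => g1 a * g2 b).
Proof.
move=> l1 l2; split=> z k x y /=; first by rewrite l1 mulrDl mulrA.
by rewrite l2 mulrDr mulrCA.
Qed.

Lemma teq_tmull s s' t : teq s s' -> teq (tmul s t) (tmul s' t).
Proof.
move=> h f hf; rewrite !sum_tmul.
have hb : bil (fun a b => \sum_(q <- t) f (a ** q.1) (b ** q.2)).
  by apply: bil_sum => q; apply: bil_comp; [apply/bilinE|apply: mulvl|apply: mulvl].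
exact: (h _ (proj2 (bilinE _) hb)).
Qed.

Lemma teq_tmulr s t t' : teq t t' -> teq (tmul s t) (tmul s t').
Proof.
move=> h f hf; rewrite !sum_tmul; apply: eq_bigr => p _.
have hb : bil (fun a b => f (p.1 ** a) (p.2 ** b)).
  by apply: bil_comp; [apply/bilinE|apply: mulvr|apply: mulvr].
exact: (h _ (proj2 (bilinE _) hb)).
Qed.

Lemma teq_map2 (g1 g2 : X -> X) s s' : vlin g1 -> vlin g2 -> teq s s' ->
  teq [seq (g1 p.1, g2 p.2) | p <- s] [seq (g1 p.1, g2 p.2) | p <- s'].
Proof.
move=> l1 l2 h f hf; rewrite !big_map /=.
have hb : bil (fun a b => f (g1 a) (g2 b)) by apply: bil_comp => //; apply/bilinE.
exact: (h _ (proj2 (bilinE _) hb)).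
Qed.

Lemma vlin_id : vlin (fun x : X => x). Proof. by []. Qed.

Lemma teq_flip s s' : teq s s' -> teq (tflip s) (tflip s').
Proof.
move=> h f hf; rewrite !big_map /=.
have hb : bil (fun a b => f b a) by have [h1 h2] := proj1 (bilinE f) hf; split.
exact: (h _ (proj2 (bilinE _) hb)).
Qed.

Lemma tflipK s : tflip (tflip s) = s.
Proof. by rewrite /tflip -map_comp /= map_id_in // => -[]. Qed.

Lemma tmul_flatten I (r : seq I) (G : I -> tens X) t :
  teq (tmul (flatten [seq G i | i <- r]) t) (flatten [seq tmul (G i) t | i <- r]).
Proof. by move=> f hf; rewrite sum_tmul !sum_flatten; apply: eq_bigr => i _; rewrite sum_tmul. Qed.

Lemma tmul_flattenr I (r : seq I) (G : I -> tens X) t :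
  teq (tmul t (flatten [seq G i | i <- r])) (flatten [seq tmul t (G i) | i <- r]).
Proof.
move=> f hf; rewrite sum_flatten [RHS]sum_flatten.
under eq_bigr => i _ do rewrite big_map sum_flatten.
rewrite exchange_big /=; apply: eq_bigr => j _; rewrite sum_tmul.
by [].
Qed.

Section ND.
Variables (W : lmodType F) (pr : X -> W -> F) (act act' : X -> W -> W).
Hypothesis pr_l : forall w, flin (pr ^~ w).
Hypothesis pr_r : forall x, flin (pr x).
Hypothesis pr_nd : forall x, (forall w, pr x w = 0) -> x = 0.
Hypothesis pr_act : forall x x' w, pr (x ** x') w = pr x (act x' w).
Hypothesis pr_act' : forall x x' w, pr (x' ** x) w = pr x (act' x' w).
Hypothesis unit_act : forall w, exists s : seq (X * W), w = \sum_(p <- s) act p.1 p.2.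
Hypothesis unit_act' : forall w, exists s : seq (X * W), w = \sum_(p <- s) act' p.1 p.2.

Lemma teq_of_pair s s' :
  (forall w1 w2, \sum_(p <- s) pr p.1 w1 * pr p.2 w2 = \sum_(p <- s') pr p.1 w1 * pr p.2 w2) ->
  teq s s'.
Proof.
move=> h f hf.
have := @TN F X X W pr pr_l pr_nd (s ++ [seq (- p.1, p.2) | p <- s']).
move=> /(_ _ f (proj1 (bilinE f) hf)).
have [f1 f2] := proj1 (bilinE f) hf.
rewrite big_cat big_map /=.
have -> : \sum_(j <- s') f (- j.1) j.2 = - \sum_(j <- s') f j.1 j.2.
  by rewrite -sumrN; apply: eq_bigr => p _; rewrite (flinN (f1 _)).
move=> H; apply/eqP; rewrite -subr_eq0; apply/eqP; apply: H => w.
apply: pr_nd => w2; rewrite (flin_sum (pr_l w2)) big_cat big_map /=.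
have e1 : forall t, \sum_(p <- t) pr (pr p.1 w *: p.2) w2 = \sum_(p <- t) pr p.1 w * pr p.2 w2.
  by move=> t; apply: eq_bigr => p _; rewrite (flinZ (pr_l w2)).
have e2 : \sum_(p <- s') pr (pr (- p.1) w *: p.2) w2 = - \sum_(p <- s') pr p.1 w * pr p.2 w2.
  by rewrite -sumrN; apply: eq_bigr => p _; rewrite (flinZ (pr_l w2)) (flinN (pr_l w)) mulNr.
by rewrite e1 e2 h subrr.
Qed.

Lemma ndR s s' : (forall x, teq (tmul s x) (tmul s' x)) -> teq s s'.
Proof.
move=> h; apply: teq_of_pair => w1 w2.
have [s1 ->] := unit_act w1; have [s2 ->] := unit_act w2.
have E : forall t : tens X, \sum_(p <- t) pr p.1 (\sum_(q <- s1) act q.1 q.2) * pr p.2 (\sum_(q <- s2) act q.1 q.2)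
   = \sum_(q1 <- s1) \sum_(q2 <- s2) tsum (fun a b => pr a q1.2 * pr b q2.2) (tmul t [:: (q1.1, q2.1)]).
  move=> t.
  transitivity (\sum_(p <- t) \sum_(q1 <- s1) \sum_(q2 <- s2) pr (p.1 ** q1.1) q1.2 * pr (p.2 ** q2.1) q2.2).
    apply: eq_bigr => p _; rewrite (flin_sum (pr_r p.1)) (flin_sum (pr_r p.2)) mulr_suml.
    apply: eq_bigr => q1 _; rewrite mulr_sumr; apply: eq_bigr => q2 _; by rewrite !pr_act.
  rewrite exchange_big; apply: eq_bigr => q1 _; rewrite exchange_big; apply: eq_bigr => q2 _.
  rewrite /tsum sum_tmul; apply: eq_bigr => p _; by rewrite big_seq1.
rewrite !E; apply: eq_bigr => q1 _; apply: eq_bigr => q2 _.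
by apply: h; apply/bilinE; apply: bil_prod.
Qed.

Lemma ndL s s' : (forall x, teq (tmul x s) (tmul x s')) -> teq s s'.
Proof.
move=> h; apply: teq_of_pair => w1 w2.
have [s1 ->] := unit_act' w1; have [s2 ->] := unit_act' w2.
have E : forall t : tens X, \sum_(p <- t) pr p.1 (\sum_(q <- s1) act' q.1 q.2) * pr p.2 (\sum_(q <- s2) act' q.1 q.2)
   = \sum_(q1 <- s1) \sum_(q2 <- s2) tsum (fun a b => pr a q1.2 * pr b q2.2) (tmul [:: (q1.1, q2.1)] t).
  move=> t.
  transitivity (\sum_(p <- t) \sum_(q1 <- s1) \sum_(q2 <- s2) pr (q1.1 ** p.1) q1.2 * pr (q2.1 ** p.2) q2.2).
    apply: eq_bigr => p _; rewrite (flin_sum (pr_r p.1)) (flin_sum (pr_r p.2)) mulr_suml.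
    apply: eq_bigr => q1 _; rewrite mulr_sumr; apply: eq_bigr => q2 _; by rewrite !pr_act'.
  rewrite exchange_big; apply: eq_bigr => q1 _; rewrite exchange_big; apply: eq_bigr => q2 _.
  rewrite /tsum sum_tmul big_seq1; apply: eq_bigr => p _; by [].
rewrite !E; apply: eq_bigr => q1 _; apply: eq_bigr => q2 _.
by apply: h; apply/bilinE; apply: bil_prod.
Qed.
End ND.

Lemma vec_teq (V W' : lmodType F) (pr' : V -> W' -> F)
  (hl : forall w, flin (pr' ^~ w)) (hnd : forall v, (forall w, pr' v w = 0) -> v = 0)
  (Phi : X -> X -> V) (h1 : forall z, vlin (Phi ^~ z)) (h2 : forall z, vlin (Phi z)) s s' :
  teq s s' -> \sum_(p <- s) Phi p.1 p.2 = \sum_(p <- s') Phi p.1 p.2.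
Proof.
move=> h; apply/eqP; rewrite -subr_eq0; apply/eqP; apply: hnd => w.
rewrite (flinB (hl w)) !(flin_sum (hl w)); apply/eqP; rewrite subr_eq0; apply/eqP.
apply: (h (fun a b => pr' (Phi a b) w)); apply/bilinE; split=> z k x y /=.
  by rewrite h1 hl.
by rewrite h2 hl.
Qed.

Lemma sum_map2 (V : nmodType) (g1 g2 : X -> X) s (phi : X -> X -> V) :
  \sum_(p <- [seq (g1 p.1, g2 p.2) | p <- s]) phi p.1 p.2 = \sum_(p <- s) phi (g1 p.1) (g2 p.2).
Proof. by rewrite big_map. Qed.

Lemma meq2_l (m : mult2 X) t x : meq2 m (melt t) -> teq (ml2 m x) (tmul t x).
Proof. by move=> h; case: (h x). Qed.
Lemma meq2_r (m : mult2 X) t x : meq2 m (melt t) -> teq (mr2 m x) (tmul x t).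
Proof. by move=> h; case: (h x). Qed.

End Tens.

From Stdlib Require Import ClassicalEpsilon.

Record ndata (F : fieldType) (X : nualg F) := ND {
  nd_W : lmodType F;
  nd_pr : X -> nd_W -> F;
  nd_act : X -> nd_W -> nd_W;
  nd_act' : X -> nd_W -> nd_W;
  nd_pr_l : forall w, flin (nd_pr ^~ w);
  nd_pr_r : forall x, flin (nd_pr x);
  nd_pr_nd : forall x, (forall w, nd_pr x w = 0) -> x = 0;
  nd_pr_act : forall x x' w, nd_pr (nua_mul x x') w = nd_pr x (nd_act x' w);
  nd_pr_act' : forall x x' w, nd_pr (nua_mul x' x) w = nd_pr x (nd_act' x' w);
  nd_unit_act : forall w, exists s : seq (X * nd_W), w = \sum_(p <- s) nd_act p.1 p.2;
  nd_unit_act' : forall w, exists s : seq (X * nd_W), w = \sum_(p <- s) nd_act' p.1 p.2 }.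

Arguments nd_pr {F X} n _ _.
Arguments nd_act {F X} n _ _.
Arguments nd_act' {F X} n _ _.
Arguments nd_pr_l {F X} n _.
Arguments nd_pr_r {F X} n _.
Arguments nd_pr_nd {F X} n _.
Arguments nd_pr_act {F X} n _ _ _.
Arguments nd_pr_act' {F X} n _ _ _.
Arguments nd_unit_act {F X} n _.
Arguments nd_unit_act' {F X} n _.

Section RM.
Variables (F : fieldType) (X : rmha F) (N : ndata X).
Local Notation "x ** y" := (@nua_mul F X x y) (at level 40, left associativity).
Local Notation D := (@Delta F X).
Local Notation S := (@antipode F X).
Local Notation eps := (@counit F X).
Implicit Types s t : tens X.

Let ndR0 s s' := @ndR F X (nd_W N) (nd_pr N) (nd_act N) (nd_pr_l N) (nd_pr_r N) (nd_pr_nd N) (nd_pr_act N) (nd_unit_act N) s s'.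
Let ndL0 s s' := @ndL F X (nd_W N) (nd_pr N) (nd_act' N) (nd_pr_l N) (nd_pr_r N) (nd_pr_nd N) (nd_pr_act' N) (nd_unit_act' N) s s'.
Let vecX := @vec_teq F X X (nd_W N) (nd_pr N) (nd_pr_l N) (nd_pr_nd N).

Lemma S_lin : vlin S. Proof. by move=> k x y; case: (rmha_antipode X) => h _ _; rewrite h. Qed.
Lemma eps_lin : flin eps. Proof. by move=> k x y; case: (rmha_counit X) => h _ _ _; rewrite h. Qed.
Lemma eps_mul x y : eps (x ** y) = eps x * eps y.
Proof. by case: (rmha_counit X) => _ h _ _; rewrite h. Qed.

Lemma ml2_teq a y y' : teq y y' -> teq (ml2 (D a) y) (ml2 (D a) y').
Proof.
move=> h; apply: ndL0 => x.
have [hm _ _] := rmha_hom X.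
apply: teq_trans (hm a x y) _; apply: teq_trans (teq_sym (hm a x y')).
exact: teq_tmulr.
Qed.

Lemma ml2_flatten a I (r : seq I) (G : I -> tens X) :
  teq (ml2 (D a) (flatten [seq G i | i <- r])) (flatten [seq ml2 (D a) (G i) | i <- r]).
Proof.
apply: ndL0 => x; have [hm _ _] := rmha_hom X.
apply: teq_trans (hm a x _) _.
apply: teq_trans (tmul_flattenr _ _ _) _.
apply: teq_trans (teq_sym (tmul_flattenr _ _ _)).
by apply: teq_flatten => i; apply: teq_sym; apply: hm.
Qed.

Lemma rep_sum I (r : seq I) (M : I -> mult2 X) (R : I -> tens X) t0 :
  meq2 (msum [seq M i | i <- r]) (melt t0) -> (forall i, meq2 (M i) (melt (R i))) ->
  teq (flatten [seq R i | i <- r]) t0.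
Proof.
move=> h hi; apply: ndR0 => x.
apply: teq_trans (tmul_flatten _ _ _) _.
apply: teq_trans (meq2_l x h); rewrite /= -map_comp.
by apply: teq_flatten => i; apply: teq_sym; apply: meq2_l.
Qed.

Definition rep (m : mult2 X) : tens X :=
  epsilon (inhabits [::]) (fun t => meq2 m (melt t)).
Lemma repP m : in_tens m -> meq2 m (melt (rep m)).
Proof. by move=> h; apply: (epsilon_spec (inhabits [::]) (fun t => meq2 m (melt t))). Qed.

Definition repR a b := rep (mcomp (D a) (m1x b)).
Definition repL a b := rep (mcomp (mx1 a) (D b)).
Definition repOp z a := tflip (rep (mcomp (mx1 z) (mflip (D a)))).

Lemma repRP a b : meq2 (mcomp (D a) (m1x b)) (melt (repR a b)).
Proof. by apply: repP; case: (rmha_cond X). Qed.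
Lemma repLP a b : meq2 (mcomp (mx1 a) (D b)) (melt (repL a b)).
Proof. by apply: repP; case: (rmha_cond X). Qed.

Lemma tmul_flip s t : teq (tflip (tmul s (tflip t))) (tmul (tflip s) t).
Proof. by move=> f hf; rewrite big_map !sum_tmul big_map; apply: eq_bigr => p _; rewrite big_map. Qed.
Lemma tmul_flip' s t : teq (tflip (tmul (tflip s) t)) (tmul s (tflip t)).
Proof. by move=> f hf; rewrite big_map !sum_tmul big_map; apply: eq_bigr => p _; rewrite big_map. Qed.

Lemma flip_meq z a t : meq2 (mcomp (mx1 z) (mflip (D a))) (melt t) ->
  meq2 (mcomp (m1x z) (D a)) (melt (tflip t)).
Proof.
move=> h x; have [h1 h2] := h (tflip x); split.
  have := teq_flip h1; rewrite /= tflipK => e.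
  apply: teq_trans (teq_trans e (tmul_flip _ _)).
  by rewrite /tflip -!map_comp.
have := teq_flip h2; rewrite /= tflipK => e.
apply: teq_trans (teq_trans e (tmul_flip' _ _)).
by rewrite /tflip -!map_comp; under eq_map => p do rewrite /=.
Qed.

Lemma repOpP z a : meq2 (mcomp (m1x z) (D a)) (melt (repOp z a)).
Proof. by apply: flip_meq; apply: repP; case: (rmha_cond_op X). Qed.


Lemma vlin_comp (g h : X -> X) : vlin g -> vlin h -> vlin (fun x => g (h x)).
Proof. by move=> lg lh k x y; rewrite lh lg. Qed.

Lemma hS1 a b : \sum_(p <- repR a b) S p.1 ** p.2 = eps a *: b.
Proof. by case: (rmha_antipode X) => _ h _; apply: h; apply: repRP. Qed.
Lemma hS2 a b : \sum_(p <- repL b a) p.1 ** S p.2 = eps a *: b.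
Proof. by case: (rmha_antipode X) => _ _ h; apply: h; apply: repLP. Qed.
Lemma hC1 a b : \sum_(p <- repR a b) eps p.1 *: p.2 = a ** b.
Proof. by case: (rmha_counit X) => _ _ h _; apply: h; apply: repRP. Qed.

Lemma T1_rep t0 : exists vs : seq (X * X), teq (flatten [seq repR p.1 p.2 | p <- vs]) t0.
Proof.
have [_ _ [_ T1s] _] := rmha_cond X.
have [vs hvs] := T1s t0; exists vs.
by apply: (rep_sum hvs) => p; apply: repRP.
Qed.

Lemma Sm_lin z : vlin (fun a => S a ** z).
Proof. by apply: (vlin_comp (g := fun x => x ** z)); [apply: mulvl | apply: S_lin]. Qed.

Lemma Klem a y (d : X) : \sum_(u <- repR a d) S (u.1 ** y) ** u.2 = eps a *: (S y ** d).
Proof.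
have [vs C1] := T1_rep [:: (y, d)].
have E1 : S y ** d = \sum_(p <- vs) eps p.1 *: p.2.
  have := vecX (Phi := fun a b => S a ** b) (@Sm_lin) (fun z => mulvr (S z)) (teq_sym C1).
  rewrite big_seq1 sum_flatten => ->; apply: eq_bigr => p _; exact: hS1.
have C2 : teq [seq (u.1 ** y, u.2) | u <- repR a d] (flatten [seq repR (a ** p.1) p.2 | p <- vs]).
  apply: ndR0 => x.
  have [_ _ hm3] := rmha_hom X.
  have sa : teq (tmul [seq (u.1 ** y, u.2) | u <- repR a d] x) (tmul (repR a d) [seq (y ** q.1, q.2) | q <- x]).
    move=> f hf; rewrite !sum_tmul big_map; apply: eq_bigr => u _.
    by rewrite big_map; apply: eq_bigr => q _; rewrite /= nua_mulA.
  apply: teq_trans sa _.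
  apply: teq_trans (teq_sym (meq2_l _ (repRP a d))) _.
  have sc : teq (ml2 (D a) [seq (p.1, d ** p.2) | p <- [seq (y ** q.1, q.2) | q <- x]]) (ml2 (D a) (tmul [:: (y, d)] x)).
    apply: ml2_teq => f hf; by rewrite sum_tmul big_seq1 !big_map.
  apply: teq_trans sc _.
  apply: teq_trans (ml2_teq a (teq_trans (teq_tmull x (teq_sym C1)) (tmul_flatten _ _ _))) _.
  apply: teq_trans (ml2_flatten _ _ _) _.
  apply: teq_trans (teq_sym (tmul_flatten _ _ _)).
  apply: teq_flatten => p.
  apply: teq_trans (ml2_teq a (teq_sym (meq2_l _ (repRP p.1 p.2)))) _.
  apply: teq_trans (meq2_l _ (repRP (a ** p.1) p.2)).
  by apply: teq_sym; case: (hm3 a p.1 [seq (q.1, p.2 ** q.2) | q <- x]).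
have := vecX (Phi := fun a b => S a ** b) (@Sm_lin) (fun z => mulvr (S z)) C2.
rewrite big_map sum_flatten => ->.
rewrite E1 scaler_sumr; apply: eq_bigr => p _; by rewrite hS1 eps_mul scalerA.
Qed.

Lemma sub0P (x y : X) : x - y = 0 -> x = y.
Proof. by move=> /eqP; rewrite subr_eq0 => /eqP. Qed.

Lemma S_anti x y : S (x ** y) = S y ** S x.
Proof.
apply: sub0P; apply: (@nua_ndr F X) => w.
rewrite (vlinB (mulvl w)) -nua_mulA.
have [ks Ck] := T1_rep [:: (x, w)].
have l1 : forall z, vlin (fun a => S (a ** y) ** z).
  by move=> z; apply: (vlin_comp (g := fun a => S a ** z)); [apply: Sm_lin | apply: mulvl].
have := vecX (Phi := fun a b => S (a ** y) ** b) l1 (fun z => mulvr (S (z ** y))) (teq_sym Ck).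
rewrite big_seq1 sum_flatten /= => ->.
have := vecX (Phi := fun a b => S a ** b) (@Sm_lin) (fun z => mulvr (S z)) (teq_sym Ck).
rewrite big_seq1 sum_flatten /= => ->.
rewrite (vlin_sum (mulvr (S y))) -sumrB big1 // => p _.
by rewrite Klem hS1 (vlinZ (mulvr _)) subrr.
Qed.

Lemma Ilem z a : \sum_(q <- repOp z a) q.1 ** S q.2 = eps a *: S z.
Proof.
apply: sub0P; apply: (@nua_ndl F X) => y.
rewrite (vlinB (mulvr y)); apply/eqP; rewrite subr_eq0; apply/eqP.
have C3 : teq [seq (y ** p.1, p.2) | p <- repOp z a] [seq (p.1, z ** p.2) | p <- repL y a].
  apply: ndR0 => x.
  have sa : teq (tmul [seq (y ** p.1, p.2) | p <- repOp z a] x) [seq (y ** p.1, p.2) | p <- tmul (repOp z a) x].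
    move: (repOp z a) => R f hf; rewrite sum_tmul !big_map sum_tmul; apply: eq_bigr => u _; apply: eq_bigr => q _; by rewrite /= nua_mulA.
  apply: teq_trans sa _.
  apply: teq_trans (teq_map2 (mulvr y) (@vlin_id _ _) (teq_sym (meq2_l x (repOpP z a)))) _.
  have -> : [seq (y ** p.1, p.2) | p <- ml2 (mcomp (m1x z) (D a)) x] =
            [seq (p.1, z ** p.2) | p <- ml2 (mcomp (mx1 y) (D a)) x].
    by rewrite /= -!map_comp.
  apply: teq_trans (teq_map2 (@vlin_id _ _) (mulvr z) (meq2_l x (repLP y a))) _.
  by move=> f hf; rewrite sum_tmul !big_map sum_tmul; apply: eq_bigr => u _; apply: eq_bigr => q _; rewrite /= nua_mulA.
rewrite (vlin_sum (mulvr y)).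
transitivity (\sum_(p <- [seq (y ** p.1, p.2) | p <- repOp z a]) p.1 ** S p.2).
  by move: (repOp z a) => R; rewrite big_map; apply: eq_bigr => p _; rewrite nua_mulA.
have l2 : forall w, vlin (fun b : X => w ** S b).
  by move=> w; apply: (vlin_comp (g := fun b => w ** b)); [apply: mulvr | apply: S_lin].
rewrite (vecX (Phi := fun a b => a ** S b) (fun z => mulvl (S z)) l2 C3) big_map /=.
transitivity ((\sum_(p <- repL y a) p.1 ** S p.2) ** S z).
  rewrite (vlin_sum (mulvl (S z))); apply: eq_bigr => p _; by rewrite S_anti nua_mulA.
by rewrite hS2 (vlinZ (mulvl _)) (vlinZ (mulvr _)).
Qed.

Lemma epsL c x : \sum_(p <- repL c x) eps p.1 *: p.2 = eps c *: x.
Proof.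
apply: sub0P; apply: (@nua_ndr F X) => d.
rewrite (vlinB (mulvl d)); apply/eqP; rewrite subr_eq0; apply/eqP.
have C4 : teq [seq (p.1, p.2 ** d) | p <- repL c x] [seq (c ** p.1, p.2) | p <- repR x d].
  apply: ndR0 => y.
  have sa : teq (tmul [seq (p.1, p.2 ** d) | p <- repL c x] y) (tmul (repL c x) [seq (p.1, d ** p.2) | p <- y]).
    by move=> f hf; rewrite !sum_tmul big_map; apply: eq_bigr => u _; rewrite big_map; apply: eq_bigr => q _; rewrite /= nua_mulA.
  apply: teq_trans sa _.
  apply: teq_trans (teq_sym (meq2_l _ (repLP c x))) _.
  apply: teq_trans (teq_map2 (mulvr c) (@vlin_id _ _) (meq2_l y (repRP x d))) _.
  by move=> f hf; rewrite sum_tmul !big_map sum_tmul; apply: eq_bigr => u _; apply: eq_bigr => q _; rewrite /= nua_mulA.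
have l1 : forall w : X, vlin (fun a : X => eps a *: w).
  by move=> w k a b; rewrite eps_lin scalerDl scalerA.
have l2 : forall a : X, vlin (fun w : X => eps a *: w).
  by move=> a k u v /=; rewrite scalerDr !scalerA mulrC.
rewrite (vlin_sum (mulvl d)).
transitivity (\sum_(p <- [seq (p.1, p.2 ** d) | p <- repL c x]) eps p.1 *: p.2).
  by rewrite big_map; apply: eq_bigr => p _; rewrite (vlinZ (mulvl _)).
rewrite (vecX (Phi := fun a b => eps a *: b) l1 l2 C4) big_map /=.
transitivity (eps c *: \sum_(p <- repR x d) eps p.1 *: p.2).
  by rewrite scaler_sumr; apply: eq_bigr => p _; rewrite eps_mul scalerA.
by rewrite hC1 (vlinZ (mulvl _)).
Qed.

Lemma eps_ex : (exists c, eps c = 1) \/ (forall x : X, x = 0).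
Proof.
case: (classic (exists c, eps c <> 0)) => [[c hc]|hno].
  left; exists ((eps c)^-1 *: c); rewrite (flinZ eps_lin) mulVf //; exact/eqP.
right=> x; apply: (@nua_ndr F X) => d; rewrite -hC1 big1 // => p _.
case: (classic (eps p.1 = 0)) => [->|ne]; first by rewrite scale0r.
by exfalso; apply: hno; exists p.1.
Qed.

End RM.

Section Main.
Variables (F : fieldType) (A B : rmha F) (P : dual_pair A B) (m : mult B).
Local Notation "x ** y" := (nua_mul x y) (at level 40, left associativity).
Local Notation pa := (pairing P).
Local Notation act := (actAB P).

Lemma pa_l w : flin (pa ^~ w).
Proof. by move=> k x y; case: (dp_bilin P k x y w w). Qed.
Lemma pa_r x : flin (pa x).
Proof. by move=> k y z; case: (dp_bilin P k x x y z). Qed.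
Lemma paB_l (w : A) : flin (fun b : B => pa w b).
Proof. exact: pa_r. Qed.
Lemma paB_r (b : B) : flin (fun w : A => pa w b).
Proof. exact: pa_l. Qed.

Definition NA : ndata A.
Proof.
refine (@ND F A B pa act (fun x' y => actBA' P y x') pa_l pa_r (@dp_nondeg_l _ _ _ P) _ _ _ _).
- by move=> x x' w; case: (dp_adj P x' x w w).
- by move=> x x' w; case: (dp_adj P x' x w w).
- by case: (dp_unital P).
- move=> w; case: (dp_unital P) => _ _ _ h; have [s ->] := h w.
  by exists [seq (p.2, p.1) | p <- s]; rewrite big_map.
Defined.

Definition NB : ndata B.
Proof.
refine (@ND F B A (fun b a => pa a b) (fun b' a => actBA P b' a) (fun b' a => actAB' P a b')
  paB_l paB_r (@dp_nondeg_r _ _ _ P) _ _ _ _).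
- by move=> x x' w /=; case: (dp_adj P w w x' x).
- by move=> x x' w /=; case: (dp_adj P w w x' x).
- by case: (dp_unital P).
- move=> w; case: (dp_unital P) => _ h _ _; have [s ->] := h w.
  by exists [seq (p.2, p.1) | p <- s]; rewrite big_map.
Defined.


Lemma eqB (x y : B) : (forall a, pa a x = pa a y) -> x = y.
Proof.
move=> h; apply/eqP; rewrite -subr_eq0; apply/eqP; apply: (@dp_nondeg_r _ _ _ P) => a.
by rewrite (flinB (pa_r a)) h subrr.
Qed.
Lemma eqA (x y : A) : (forall b, pa x b = pa y b) -> x = y.
Proof.
move=> h; apply/eqP; rewrite -subr_eq0; apply/eqP; apply: (@dp_nondeg_l _ _ _ P) => b.
by rewrite (flinB (pa_l b)) h subrr.
Qed.

Lemma pa_act a' a b : pa a' (act a b) = pa (a' ** a) b.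
Proof. by case: (dp_adj P a a' b b). Qed.

Lemma act_l b : vlin (fun a => act a b).
Proof.
move=> k x y; apply: eqB => a' /=.
by rewrite pa_act (nua_mulDr) pa_l (pa_r a') !pa_act.
Qed.
Lemma act_r a : vlin (act a).
Proof.
move=> k x y; apply: eqB => a' /=.
by rewrite pa_act pa_r (pa_r a') !pa_act.
Qed.
Lemma act_mul u v b : act (u ** v) b = act u (act v b).
Proof. by apply: eqB => a'; rewrite !pa_act nua_mulA. Qed.

Lemma mL_lin (X : nualg F) (n : mult X) : vlin (mL n).
Proof.
move=> k x y; apply/eqP; rewrite -subr_eq0; apply/eqP; apply: (@nua_ndl F X) => z.
by rewrite (vlinB (mulvr z)) mLR nua_mulDr nua_mulDr !mLR subrr.
Qed.


Lemma vlin_c (U V Z : lmodType F) (g : V -> Z) (h : U -> V) :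
  vlin g -> vlin h -> vlin (fun x => g (h x)).
Proof. by move=> lg lh k x y; rewrite lh lg. Qed.

Let vecB := @vec_teq F A B A (fun b a => pa a b) paB_l (@dp_nondeg_r _ _ _ P).
Let vecA := @vec_teq F A A B pa pa_l (@dp_nondeg_l _ _ _ P).

Hypothesis FP : fixed_point P m.

Lemma step1 u w b0 : mL m (act (u ** antipode w) b0) = act u (mL m (act (antipode w) b0)).
Proof.
have [_ in2 _ [_ T2s]] := rmha_cond_op A.
have [s hs] := T2s [:: (w, u)].
have Cs0 : teq (flatten [seq rep (mcomp (mx1 p.1) (mflip (Delta p.2))) | p <- s]) [:: (w, u)].
  by apply: (rep_sum NA hs) => p; apply: repP; exact: in2.
have Cs : teq (flatten [seq repOp p.1 p.2 | p <- s]) [:: (u, w)].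
  by have := teq_flip Cs0; rewrite /tflip map_flatten -map_comp.
have Hp : forall p : A * A, counit p.2 *: mL m (act (antipode p.1) b0) =
    \sum_(q <- repOp p.1 p.2) act q.1 (mL m (act (antipode q.2) b0)).
  move=> [x a] /=.
  have := (FP a).1 [:: (antipode x, b0)] (fun c => repOp (antipode_inv c) a) (act (antipode x) b0).
  rewrite big_seq1 => /(_ erefl (fun c => repOpP (antipode_inv c) a)).
  by rewrite big_seq1 /= rmha_SK.
have l2 : forall z : A, vlin (fun b => act z (mL m (act (antipode b) b0))).
  move=> z; apply: (vlin_c (act_r z)); apply: (vlin_c (mL_lin m)).
  by apply: (vlin_c (act_l b0)); apply: S_lin.
have E1 : \sum_(p <- s) counit p.2 *: mL m (act (antipode p.1) b0) = act u (mL m (act (antipode w) b0)).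
  under eq_bigr => p _ do rewrite Hp.
  rewrite -sum_flatten.
  by rewrite (vecB (Phi := fun a b => act a (mL m (act (antipode b) b0))) (fun z => act_l _) l2 Cs) big_seq1.
have l3 : forall z : A, vlin (fun b : A => z ** antipode b).
  by move=> z; apply: (vlin_c (mulvr z)); apply: S_lin.
have E2 : \sum_(p <- s) counit p.2 *: antipode p.1 = u ** antipode w.
  under eq_bigr => p _ do rewrite -(Ilem NA p.1 p.2).
  rewrite -sum_flatten.
  by rewrite (vecA (Phi := fun a b => a ** antipode b) (fun z => mulvl _) l3 Cs) big_seq1.
rewrite -E1 -E2 (vlin_sum (act_l b0)) (vlin_sum (mL_lin m)).
by apply: eq_bigr => p _; rewrite (vlinZ (act_l _)) (vlinZ (mL_lin m)).
Qed.


Lemma commut u y : mL m (act u y) = act u (mL m y).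
Proof.
have [_ _ hu _] := dp_unital P; have [s ->] := hu y.
rewrite (vlin_sum (act_r u)) (vlin_sum (mL_lin m)) (vlin_sum (mL_lin m)) (vlin_sum (act_r u)).
apply: eq_bigr => p _.
by have := step1 u (antipode_inv p.1) p.2; rewrite rmha_KS act_mul.
Qed.

Lemma main_scalar : exists c, forall b, mL m b = c *: b /\ mR m b = c *: b.
Proof.
case: (eps_ex B) => [[c1 hc1] | triv]; last first.
  by exists 0 => b; split; rewrite [LHS]triv [RHS]triv.
set c0 := counit (mL m c1).
have emR : forall x : B, counit (mR m x) = c0 * counit x.
  move=> x; have := congr1 (@counit F B) (mLR m x c1); rewrite !eps_mul hc1 mulr1 => <-.
  by rewrite mulrC.
have key : forall y, mL m y = c0 *: y.
  move=> y.
  have e1 := epsL NB c1 (mL m y).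
  have e2 := epsL NB (mR m c1) y.
  rewrite hc1 scale1r in e1; rewrite emR hc1 mulr1 in e2.
  rewrite -e1 -e2; apply: eqB => a.
  have h : forall T : tens B, pa a (\sum_(p <- T) counit p.1 *: p.2) = counit (\sum_(p <- T) pa a p.2 *: p.1).
    move=> T; rewrite (flin_sum (pa_r a)) (flin_sum (@eps_lin F B)); apply: eq_bigr => p _.
    by rewrite (flinZ (pa_r a)) (flinZ (@eps_lin F B)) mulrC.
  rewrite !h; congr counit.
  rewrite -(proj2 (dp_actAB P a (mL m y) c1 _) (repLP c1 (mL m y))).
  rewrite -(proj2 (dp_actAB P a y (mR m c1) _) (repLP (mR m c1) y)).
  by rewrite -commut mLR.
exists c0 => b; split; first exact: key.
apply/eqP; rewrite -subr_eq0; apply/eqP; apply: (@nua_ndr F B) => y.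
by rewrite (vlinB (mulvl y)) -mLR key (vlinZ (mulvr _)) (vlinZ (mulvl _)) subrr.
Qed.

End Main.

Local Open Scope ring_scope.

Theorem proposition6p5 (R : realType) (A B : rmha R[i]) (P : dual_pair A B)
  (m : mult B) :
  fixed_point P m ->
  exists c : R[i], forall b : B, mL m b = c *: b /\ mR m b = c *: b.
Proof. move=> FP; exact: (main_scalar FP). Qed.
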